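(* Let $N\ge3$, $1<k<N-1$, $p>0$, $c>0$, and let $v:\mathbb R^{N-1}\to[0,\infty]$ be measurable with $0<v<\infty$ a.e. in $\mathbb R^{N-1}$ and $$v(x')\ge c\int_{\mathbb R^{N-1}}\frac{v(y')^p}{|x'-y'|^{k-1}}dy'\quad\text{for a.e. }x'\in\mathbb R^{N-1}.$$ Then there exists $C>0$ such that $v(x')\ge C|x'|^{1-k}$ for a.e. $x'\in\mathbb R^{N-1}$ with $|x'|>1$. *)

(* Defs.v *)
From HB Require Import structures.
From mathcomp Require Import all_boot all_order all_algebra.
From mathcomp Require Import all_classical all_reals all_analysis.
From mathcomp Require Import measurable_realfun.
Set Implicit Arguments. Unset Strict Implicit. Unset Printing Implicit Defensive.
Import Order.TTheory GRing.Theory Num.Theory.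
Import numFieldNormedType.Exports.
Local Open Scope classical_set_scope.
Local Open Scope ring_scope.

(* R^n is modelled as n.-tuple R, with the product (= Borel) sigma-algebra
   provided by mathcomp-analysis (measure_tuple_display). *)

Definition euclid_norm (R : realType) (n : nat) (x : n.-tuple R) : R :=
  Num.sqrt (\sum_(i < n) (tnth x i) ^+ 2).
Definition euclid_dist (R : realType) (n : nat) (x y : n.-tuple R) : R :=
  Num.sqrt (\sum_(i < n) (tnth x i - tnth y i) ^+ 2).

(* Lebesgue integral on R^n of a function with values in \bar R, as the
   iterated one-dimensional Lebesgue integral (by Tonelli this is the
   Lebesgue integral on R^n for nonnegative measurable functions). *)
Fixpoint lebint (R : realType) (n : nat) : (n.-tuple R -> \bar R) -> \bar R :=
  match n with
  | 0 => fun f => f [tuple]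
  | n'.+1 => fun f =>
      (\int[@lebesgue_measure R]_t lebint (fun x : n'.-tuple R => f (cons_tuple t x)))%E
  end.

Definition lebn (R : realType) (n : nat) (A : set (n.-tuple R)) : \bar R :=
  lebint (fun x => (\1_A x)%:E).

Definition ae_leb (R : realType) (n : nat) (P : n.-tuple R -> Prop) : Prop :=
  exists B : set (n.-tuple R),
    [/\ measurable B, [set x | ~ P x] `<=` B & lebn B = 0%E].

(* Main.v *)
Require Import Defs.
From HB Require Import structures.
From mathcomp Require Import all_boot all_order all_algebra.
From mathcomp Require Import all_classical all_reals all_analysis.
From mathcomp Require Import measurable_realfun.
From mathcomp Require Import ring lra.
Import Order.TTheory GRing.Theory Num.Theory.
Import numFieldNormedType.Exports.
Local Open Scope classical_set_scope.
Local Open Scope ring_scope.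
Section L.
Variable R : realType.
Local Open Scope ereal_scope.

Lemma ge0_le_integralT d (T : measurableType d) (mu : {measure set T -> \bar R}) (f g : T -> \bar R) :
  (forall x, 0 <= f x) -> (forall x, f x <= g x) -> \int[mu]_x f x <= \int[mu]_x g x.
Proof.
move=> f0 fg; have g0 x : 0 <= g x by apply: le_trans (f0 x) (fg x).
rewrite !ge0_integralTE //.
apply: ge_ereal_sup => _ [h /= hf <-]; apply: ereal_sup_ubound; exists h => //= x.
exact: le_trans (hf x) (fg x).
Qed.

Lemma lebint_ge0 n (f : n.-tuple R -> \bar R) : (forall x, 0 <= f x) -> 0 <= lebint f.
Proof.
elim: n f => [|n IH] f f0 /=; first exact: f0.
apply: integral_ge0 => t _; apply: IH => x; exact: f0.
Qed.

Lemma lebint_le n (f g : n.-tuple R -> \bar R) : (forall x, 0 <= f x) ->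
  (forall x, f x <= g x) -> lebint f <= lebint g.
Proof.
elim: n f g => [|n IH] f g f0 fg /=; first exact: fg.
apply: ge0_le_integralT => t; first by apply: lebint_ge0 => x; exact: f0.
by apply: IH => x; [exact: f0|exact: fg].
Qed.

Lemma lebint_meas n d (X : measurableType d) (f : X -> n.-tuple R -> \bar R) :
  (forall x y, 0 <= f x y) ->
  measurable_fun setT (fun z : X * n.-tuple R => f z.1 z.2) ->
  measurable_fun setT (fun x => lebint (f x)).
Proof.
elim: n d X f => [|n IH] d X f f0 mf /=.
  have -> : (fun x => f x [tuple]) =
     (fun z : X * 0.-tuple R => f z.1 z.2) \o (fun x => (x, [tuple])) by [].
  apply: measurableT_comp mf _; apply: measurable_fun_pair => //.
pose g (z : X * R) := lebint (fun y => f z.1 (cons_tuple z.2 y)).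
have mg : measurable_fun setT g.
  apply: IH => [z y|]; first exact: f0.
  have -> : (fun z : (X * R) * n.-tuple R => f z.1.1 (cons_tuple z.1.2 z.2)) =
    (fun z : X * n.+1.-tuple R => f z.1 z.2) \o
    (fun z : (X * R) * n.-tuple R => (z.1.1, cons_tuple z.1.2 z.2)) by [].
  apply: measurableT_comp mf _; apply: measurable_fun_pair.
    exact: (measurableT_comp measurable_fst measurable_fst).
  apply: measurable_cons => //.
  exact: (measurableT_comp measurable_snd measurable_fst).
have H := (@measurable_fun_fubini_tonelli_F _ _ X _ R lebesgue_measure g mg
   (fun z => lebint_ge0 _ _ (fun y => f0 z.1 _))).
exact H.
Qed.

Lemma mcons_sec n (f : n.+1.-tuple R -> \bar R) : measurable_fun setT f ->
  measurable_fun setT (fun z : R * n.-tuple R => f (cons_tuple z.1 z.2)).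
Proof.
move=> mf; apply: (measurableT_comp mf); exact: measurable_cons.
Qed.

Lemma mcons_y n (f : n.+1.-tuple R -> \bar R) (t : R) : measurable_fun setT f ->
  measurable_fun setT (fun y : n.-tuple R => f (cons_tuple t y)).
Proof.
move=> mf; apply: (measurableT_comp mf); apply: measurable_cons => //.
Qed.

Lemma mlebint_cons n (f : n.+1.-tuple R -> \bar R) : (forall x, 0 <= f x) ->
  measurable_fun setT f ->
  measurable_fun setT (fun t : R => lebint (fun y => f (cons_tuple t y))).
Proof.
move=> f0 mf; apply: (@lebint_meas n _ _ (fun t y => f (cons_tuple t y))) => //.
exact: mcons_sec.
Qed.

Lemma lebintD n (f g : n.-tuple R -> \bar R) : (forall x, 0 <= f x) ->
  (forall x, 0 <= g x) -> measurable_fun setT f -> measurable_fun setT g ->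
  lebint (fun x => f x + g x) = lebint f + lebint g.
Proof.
elim: n f g => [|n IH] f g f0 g0 mf mg //=.
rewrite -ge0_integralD //; last 4 first.
- by move=> t _; apply: lebint_ge0.
- exact: mlebint_cons.
- by move=> t _; apply: lebint_ge0.
- exact: mlebint_cons.
apply: eq_integral => t _; apply: IH => //; exact: mcons_y.
Qed.

Lemma lebintZ n (a : R) (f : n.-tuple R -> \bar R) : (0 <= a)%R ->
  (forall x, 0 <= f x) -> measurable_fun setT f ->
  lebint (fun x => a%:E * f x) = a%:E * lebint f.
Proof.
elim: n f => [|n IH] f a0 f0 mf //=.
rewrite -ge0_integralZl_EFin //; last 2 first.
- by move=> t _; apply: lebint_ge0.
- exact: mlebint_cons.
apply: eq_integral => t _; apply: IH => //; exact: mcons_y.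
Qed.

Lemma mpos n (f : n.-tuple R -> \bar R) : measurable_fun setT f ->
  measurable [set y | 0 < f y].
Proof.
move=> mf; rewrite -[X in measurable X]setTI.
apply: (measurable_lte measurableT _ mf); exact: measurable_cst.
Qed.

Lemma lebint_eq0 n (f : n.-tuple R -> \bar R) : (forall x, 0 <= f x) ->
  measurable_fun setT f -> lebint f = 0 ->
  lebint (fun y => (\1_[set z | (0 < f z)%E] y)%:E) = 0.
Proof.
elim: n f => [|n IH] f f0 mf /=.
  by move=> H; rewrite indicE memNset //= H ltxx.
move=> H.
have hae : ae_eq lebesgue_measure setT
    (fun t => lebint (fun y => f (cons_tuple t y))) (cst 0).
  apply/ae_eq_integral_abs => //; first exact: mlebint_cons.
  rewrite -H; apply: eq_integral => t _; rewrite gee0_abs //.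
  exact: lebint_ge0.
transitivity (\int[@lebesgue_measure R]_t (cst 0 t)); last exact: integral0.
apply: ae_eq_integral => //.
- apply: (@mlebint_cons n (fun y => (\1_[set z | (0 < f z)%E] y : R)%:E)) => //.
  apply/measurable_EFinP; exact: (@measurable_indic _ _ R _ _ (mpos _ _ mf)).
- apply: filterS hae => t Ht Dt; apply: IH => //; first exact: mcons_y.
exact: Ht.
Qed.

Lemma mEFin_indic d (T : measurableType d) (A : set T) : measurable A ->
  measurable_fun setT (fun x => (\1_A x : R)%:E).
Proof. by move=> mA; apply/measurable_EFinP; exact: measurable_indic. Qed.

Definition box n (a : R) : set (n.-tuple R) := [set y | forall i, (0 <= tnth y i <= a)%R].

Lemma mbox n a : measurable (box n a).
Proof.
have -> : box n a = \bigcap_(i in [set: 'I_n])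
    ((fun y : n.-tuple R => tnth y i) @^-1` `[0%R, a]%classic).
  apply/seteqP; split => y /= H.
  - by move=> i _ /=; rewrite in_itv /=; exact: H.
  - by move=> i; have := H i I; rewrite /= in_itv.
apply: fin_bigcap_measurable; first exact: finite_finset.
move=> i _; rewrite -[X in measurable X]setTI; apply: measurable_tnth => //.
Qed.

Lemma box_cons n a t (y : n.-tuple R) :
  (cons_tuple t y \in box n.+1 a) = (t \in `[0%R, a]%classic) && (y \in box n a).
Proof.
apply/idP/andP => [/set_mem H|[/set_mem Ht /set_mem Hy]].
  split; apply/mem_set.
  - by have := H ord0; rewrite /= in_itv /=.
  - by move=> j; have := H (lift ord0 j); rewrite tnthS.
apply/mem_set => i; case: (unliftP ord0 i) => [j ->|->].
  by rewrite tnthS; exact: Hy.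
by move: Ht; rewrite /= in_itv.
Qed.

Lemma lebn_box n a : (0 < a)%R -> lebn (box n a) = (a ^+ n)%:E.
Proof.
move=> a0; rewrite /lebn; elim: n => [|n IH] /=.
  by rewrite indicE expr0 (mem_set (_ : box 0 a [tuple])) // => -[].
transitivity (\int[@lebesgue_measure R]_t ((\1_(`[0%R, a]%classic) t : R)%:E * (a ^+ n)%:E)).
  apply: eq_integral => t _; rewrite -IH -lebintZ; last 3 first.
  - by rewrite indicE.
  - by move=> y; rewrite lee_fin.
  - by apply/measurable_EFinP; apply: measurable_indic; exact: mbox.
  apply: congr1; apply: funext => y.
  by rewrite !indicE box_cons -EFinM; case: (t \in _); case: (y \in _);
    rewrite /= ?mulr1 ?mulr0 ?mul0r.
rewrite ge0_integralZr; last 4 first.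
- exact: measurableT.
- refine (@mEFin_indic _ _ _ _); exact: measurable_itv.
- by move=> t _; rewrite lee_fin.
- by rewrite lee_fin exprn_ge0 // ltW.
rewrite integral_indic //.
rewrite setIT; change ((@lebesgue_measure R `[0%R, a]%classic) * (a ^+ n)%:E = (a ^+ n.+1)%:E)%E.
rewrite lebesgue_measure_itv /= lte_fin a0 oppr0 -EFinD addr0 -EFinM.
by rewrite exprS.
Qed.

Lemma lebn_sub n (A B C : set (n.-tuple R)) : measurable A -> measurable B ->
  measurable C -> A `<=` B `|` C -> lebn A <= lebn B + lebn C.
Proof.
move=> mA mB mC ABC; rewrite /lebn -lebintD; last 4 first.
- by move=> x; rewrite lee_fin.
- by move=> x; rewrite lee_fin.
- by apply/measurable_EFinP; exact: measurable_indic.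
- by apply/measurable_EFinP; exact: measurable_indic.
apply: lebint_le => [x|x]; first by rewrite lee_fin.
rewrite !indicE; case: (boolP (x \in A)) => [/set_mem /ABC [] Hx|_].
- by rewrite mem_set //= -EFinD lee_fin ler_wpDr.
- by rewrite (mem_set Hx) -EFinD lee_fin ler_wpDl.
- by rewrite -EFinD lee_fin addr_ge0.
Qed.

Lemma dist_bound n (x y : n.-tuple R) : (0 < n)%N ->
  box n ((2 * n%:R)^-1)%R y -> (1 < euclid_norm x)%R ->
  (0 < euclid_dist x y <= 2 * euclid_norm x)%R.
Proof.
move=> n0 Hy Hx.
set a : R := ((2 * n%:R)^-1)%R.
have nR : (1 <= n%:R :> R)%R by rewrite ler1n.
have a0 : (0 < a)%R by rewrite invr_gt0; lra.
have na : (n%:R * a = 1 / 2 :> R)%R.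
  rewrite /a; field; apply/eqP => H; lra.
have ale : (a <= 1 / 2)%R by nra.
set S := (\sum_(i < n) tnth x i ^+ 2)%R.
set T := (\sum_(i < n) (tnth x i - tnth y i) ^+ 2)%R.
set Y := (\sum_(i < n) tnth y i ^+ 2)%R.
have HY : (Y <= 1 / 4)%R.
  apply: (@le_trans _ _ (\sum_(i < n) a ^+ 2)%R).
    apply: ler_sum => i _; have /andP[h1 h2] := Hy i; by rewrite !expr2; apply: ler_pM.
  rewrite sumr_const card_ord -[(_ *+ n)%R]mulr_natl expr2 mulrA na; lra.
have H1 : (T <= 2 * S + 2 * Y)%R.
  rewrite !mulr_sumr -big_split /=; apply: ler_sum => i _.
  have := sqr_ge0 (tnth x i + tnth y i); nra.
have H2 : (S <= 2 * T + 2 * Y)%R.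
  rewrite !mulr_sumr -big_split /=; apply: ler_sum => i _.
  have := sqr_ge0 (tnth x i - 2 * tnth y i); nra.
have S0 : (0 <= S)%R by apply: sumr_ge0 => i _; exact: sqr_ge0.
have T0 : (0 <= T)%R by apply: sumr_ge0 => i _; exact: sqr_ge0.
have Y0 : (0 <= Y)%R by apply: sumr_ge0 => i _; exact: sqr_ge0.
have mS : (Num.sqrt S ^+ 2 = S)%R by rewrite sqr_sqrtr.
have dT : (Num.sqrt T ^+ 2 = T)%R by rewrite sqr_sqrtr.
have m0 : (0 <= Num.sqrt S)%R by exact: sqrtr_ge0.
have d0 : (0 <= Num.sqrt T)%R by exact: sqrtr_ge0.
rewrite /euclid_norm /euclid_dist -/S -/T in Hx *.
have S1 : (1 < S)%R by nra.
have Tpos : (0 < T)%R by lra.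
have T4 : (T <= 4 * S)%R by lra.
apply/andP; split; first by rewrite sqrtr_gt0.
nra.
Qed.
End L.
Arguments box {R} n a.
Arguments mbox {R} n a.
Arguments mEFin_indic {R d T A}.
Arguments lebint_ge0 {R n f}.
Arguments lebint_eq0 {R n f}.
Arguments lebn_sub {R n A B C}.
Arguments mpos {R n f}.
Arguments lebn_box {R} n a.
Arguments lebintZ {R n} a {f}.
Arguments lebint_le {R n f g}.
Arguments dist_bound {R n x y}.

Theorem lemma3p1 (R : realType) (N : nat) (k p c : R)
  (v : (N.-1).-tuple R -> \bar R) :
  (3 <= N)%N -> 1 < k -> k < N%:R - 1 -> 0 < p -> 0 < c ->
  measurable_fun [set: (N.-1).-tuple R] v ->
  (forall x, (0 <= v x)%E) ->
  ae_leb (fun x => (0 < v x < +oo)%E) ->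
  ae_leb (fun x => (c%:E * lebint (fun y =>
                      (v y `^ p)%E * (((euclid_dist x y) `^ (k - 1))^-1)%:E) <= v x)%E) ->
  exists C : R, 0 < C /\
    ae_leb (fun x => 1 < euclid_norm x -> ((C * (euclid_norm x) `^ (1 - k))%:E <= v x)%E).
Proof.
move=> N3 k1 kN p0 c0 mv v0 [B0 [mB0 sub0 leb0]] [B1 [mB1 sub1 leb1]].
have n0 : (0 < N.-1)%N by rewrite -subn1 subn_gt0 (@leq_trans 3).
set a : R := ((2 * (N.-1)%:R)^-1)%R.
have a0 : 0 < a by rewrite invr_gt0 mulr_gt0 // ltr0n.
pose g := fun y : (N.-1).-tuple R => ((v y `^ p) * (\1_(box (N.-1) a) y : R)%:E)%E.
have g0 : forall y, (0 <= g y)%E.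
  by move=> y; apply: mule_ge0; [exact: poweR_ge0|rewrite lee_fin].
have mg : measurable_fun setT g.
  apply: emeasurable_funM; first exact: (measurableT_comp (measurable_poweR p) mv).
  by apply: mEFin_indic; exact: mbox.
have Ipos : (0 < lebint g)%E.
  rewrite lt_neqAle lebint_ge0 // andbT; apply/negP => /eqP I0.
  have L0 := lebint_eq0 g0 mg (esym I0).
  have Hsub : box (N.-1) a `<=` [set y | (0 < g y)%E] `|` B0.
    move=> z Hz; have [Bz|nBz] := pselect (B0 z); [by right|left].
    have Hv : (0 < v z < +oo)%E.
      by have [//|Hn] := pselect ((0 < v z < +oo)%E); case: nBz; exact: sub0.
    move/andP: Hv => [vz _]; rewrite /= /g indicE mem_set // mulr1n mule1.
    exact: poweR_gt0.
  have := lebn_sub (mbox (N.-1) a) (mpos mg) mB0 Hsub.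
  by rewrite lebn_box // leb0 /lebn L0 adde0 lee_fin leNgt exprn_gt0.
pose K (x : (N.-1).-tuple R) := (((2 * euclid_norm x) `^ (k - 1))^-1)%R.
have K0 x : 0 < euclid_norm x -> 0 < K x.
  by move=> m0; rewrite invr_gt0 powR_gt0 // mulr_gt0.
have Hkey x : 1 < euclid_norm x ->
  ((K x)%:E * lebint g <= lebint (fun y =>
      (v y `^ p)%E * (((euclid_dist x y) `^ (k - 1))^-1)%:E))%E.
  move=> Hx; have Kx := K0 x (lt_trans ltr01 Hx).
  rewrite -lebintZ //; last exact: ltW.
  apply: lebint_le => y; first by apply: mule_ge0; [rewrite lee_fin ltW|exact: g0].
  rewrite /g indicE; case: (boolP (y \in box _ a)) => [/set_mem yb|_].
    rewrite mulr1n mule1 muleC; apply: lee_wpmul2l; first exact: poweR_ge0.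
    rewrite lee_fin /K; have /andP[d0 dle] := dist_bound n0 yb Hx.
    rewrite lef_pV2 ?posrE ?powR_gt0 ?mulr_gt0 //; last exact: lt_trans ltr01 Hx.
    apply: ge0_ler_powR => //; first by rewrite subr_ge0 ltW.
      by rewrite nnegrE ltW.
    by rewrite nnegrE mulr_ge0 // ltW // (lt_trans ltr01 Hx).
  rewrite mulr0n mule0 mule0; apply: mule_ge0; first exact: poweR_ge0.
  by rewrite lee_fin invr_ge0 powR_ge0.
move: Ipos Hkey; case: (lebint g) => [r| |] //= rpos Hkey.
- exists (c * ((2 : R) `^ (k - 1))^-1 * r)%R; split.
    by rewrite !mulr_gt0 // ?invr_gt0 ?powR_gt0 // -lte_fin.
  exists B1; split => // x nP.
  have [//|nB] := pselect (B1 x); exfalso; apply: nP => Hx.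
  have Hin : (c%:E * lebint (fun y =>
      (v y `^ p)%E * (((euclid_dist x y) `^ (k - 1))^-1)%:E) <= v x)%E.
    have [//|Hn] := pselect (c%:E * lebint (fun y =>
      (v y `^ p)%E * (((euclid_dist x y) `^ (k - 1))^-1)%:E) <= v x)%E.
    by case: nB; exact: sub1.
  apply: le_trans Hin; apply: le_trans (lee_wpmul2l _ (Hkey x Hx)); last first.
    by rewrite lee_fin ltW.
  rewrite -!EFinM lee_fin le_eqVlt; apply/orP; left; apply/eqP.
  have m0 : 0 < euclid_norm x by exact: lt_trans ltr01 Hx.
  rewrite /K powRM //; last exact: ltW.
  have -> : (1 - k = - (k - 1))%R by rewrite opprB.
  rewrite powRN invfM; ring.
- exists 1%R; split => //.
  exists B1; split => // x nP.
  have [//|nB] := pselect (B1 x); exfalso; apply: nP => Hx.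
  have Hin : (c%:E * lebint (fun y =>
      (v y `^ p)%E * (((euclid_dist x y) `^ (k - 1))^-1)%:E) <= v x)%E.
    have [//|Hn] := pselect (c%:E * lebint (fun y =>
      (v y `^ p)%E * (((euclid_dist x y) `^ (k - 1))^-1)%:E) <= v x)%E.
    by case: nB; exact: sub1.
  apply: le_trans Hin; apply: le_trans (leey _) _.
  rewrite -(gt0_muley (_ : (0 < c%:E)%E)) ?lte_fin //.
  apply: lee_wpmul2l; first by rewrite lee_fin ltW.
  rewrite -(gt0_muley (_ : (0 < (K x)%:E)%E)); first exact: Hkey.
  by rewrite lte_fin K0 // (lt_trans ltr01 Hx).
Qed.
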